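(* For every two integers $a,b$ with $2\le a\le b$, there exists a finite, simple, connected graph $G$ of order $b$ with $\dim_{wt}(G)=a$.
   Context: $d(x,y)$ is the shortest-path distance. A set $W\subseteq V(G)$ is a resolving set if for every two distinct vertices $y,z$ there is $x\in W$ with $d(y,x)\ne d(z,x)$. A set $W$ is a weak total resolving set (WTR-set) if $W$ is resolving and, for every $w\in W$ and every $x\in V(G)\setminus W$, there is $w'\in W\setminus\{w\}$ with $d(x,w')\ne d(w,w')$. $\dim_{wt}(G)$ is the minimum cardinality of a WTR-set. *)

(* Defs.v *)
From mathcomp Require Import all_boot.
Set Implicit Arguments. Unset Strict Implicit. Unset Printing Implicit Defensive.

Definition simple_graph (T : finType) (e : rel T) : Prop :=
  symmetric e /\ irreflexive e.

Definition connected_graph (T : finType) (e : rel T) : Prop :=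
  forall x y : T, connect e x y.

Fixpoint ball (T : finType) (e : rel T) (n : nat) (x : T) : {set T} :=
  match n with
  | 0 => [set x]
  | n'.+1 => ball e n' x :|: [set z | [exists y in ball e n' x, e y z]]
  end.

(* shortest-path distance: least n with y in the n-ball around x
   (search range 0..#|T|-1 suffices for connected graphs). *)
Definition dist (T : finType) (e : rel T) (x y : T) : nat :=
  find (fun n => y \in ball e n x) (iota 0 #|T|).

Definition resolving (T : finType) (e : rel T) (W : {set T}) : Prop :=
  forall y z : T, y != z -> exists2 x, x \in W & dist e y x != dist e z x.

Definition wtr_set (T : finType) (e : rel T) (W : {set T}) : Prop :=
  resolving e W /\
  forall w x, w \in W -> x \notin W ->
    exists2 w', w' \in W :\ w & dist e x w' != dist e w w'.

Definition wt_dim_eq (T : finType) (e : rel T) (k : nat) : Prop :=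
  (exists W : {set T}, wtr_set e W /\ #|W| = k) /\
  (forall W : {set T}, wtr_set e W -> k <= #|W|).

(* Main.v *)
Require Import Defs.
From mathcomp Require Import all_boot zify.
Set Implicit Arguments. Unset Strict Implicit.

Lemma ball_char (T : finType) (e : rel T) (D : T -> nat) x :
  D x = 0 -> (forall y, D y = 0 -> y = x) ->
  (forall y z, e y z -> D z <= (D y).+1) ->
  (forall z, 0 < D z -> exists2 y, e y z & (D y).+1 = D z) ->
  forall n, ball e n x = [set y | D y <= n].
Proof.
move=> H0 H0' Htri Hpred; elim=> [|n IH] /=.
  apply/setP=> y; rewrite !inE; apply/eqP/idP => [->|]; first by rewrite H0.
  by rewrite leqn0 => /eqP /H0'.
apply/setP=> z; rewrite IH !inE; apply/idP/idP.
  case/orP=> [H|]; first by apply: leq_trans H _.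
  case/existsP=> y /andP[]; rewrite inE => Hy /Htri Hz.
  by apply: leq_trans Hz _.
rewrite leq_eqVlt ltnS; case/orP=> [/eqP Hz|->]; last by [].
have: 0 < D z by rewrite Hz.
move/Hpred=> [y Hyz Hy]; apply/orP; right; apply/existsP; exists y.
by rewrite inE Hyz andbT; rewrite Hz in Hy; case: Hy => ->.
Qed.

Lemma find_iota k m N : m <= k < m + N -> find (fun n => k <= n) (iota m N) = k - m.
Proof.
elim: N m => [|N IH] m; first by lia.
move=> H /=; case: ifP => Hk; first by lia.
rewrite IH; lia.
Qed.

Lemma dist_char (T : finType) (e : rel T) (D : T -> nat) x :
  D x = 0 -> (forall y, D y = 0 -> y = x) ->
  (forall y z, e y z -> D z <= (D y).+1) ->
  (forall z, 0 < D z -> exists2 y, e y z & (D y).+1 = D z) ->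
  (forall y, D y < #|T|) ->
  forall y, dist e x y = D y.
Proof.
move=> H0 H0' Htri Hpred Hlt y; rewrite /dist.
rewrite (@eq_find _ _ (fun n => D y <= n)); last first.
  by move=> n; rewrite (ball_char H0 H0' Htri Hpred) inE.
rewrite find_iota; last by have := Hlt y; lia.
by rewrite subn0.
Qed.

Lemma ball_connect (T : finType) (e : rel T) x n y : y \in ball e n x -> connect e x y.
Proof.
elim: n y => [|n IH] y /=; first by rewrite inE => /eqP ->.
rewrite !inE; case/orP=> [/IH //|/existsP [z /andP [Hz Hzy]]].
by apply: connect_trans (IH _ Hz) (connect1 Hzy).
Qed.

Lemma card_lt (n k : nat) : k <= n -> #|[set i : 'I_n | i < k]| = k.
Proof.
move=> Hk.
have -> : [set i : 'I_n | i < k] = [set widen_ord Hk i | i in 'I_k].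
  apply/setP=> i; rewrite inE; apply/idP/imsetP.
    by move=> Hi; exists (Ordinal Hi) => //; apply: val_inj.
  by case=> j _ ->; rewrite /= ltn_ord.
rewrite card_imset ?card_ord //.
by move=> i j /(congr1 val) /= /val_inj.
Qed.

Definition Dn (a i j : nat) : nat :=
  if i == j then 0 else if (i < a) && (j < a) then 1 else
  (maxn i (a-1) - maxn j (a-1)) + (maxn j (a-1) - maxn i (a-1))
  + (if i < a-1 then 1 else 0) + (if j < a-1 then 1 else 0).
Definition En (a i j : nat) : bool :=
  (i != j) && ((i < a) && (j < a) || (i.+1 == j) && (a-1 <= i) || (j.+1 == i) && (a-1 <= j)).
Definition pw (a x z : nat) : nat :=
  if z < a then (if x < a then x else (if z == a-1 then a else a-1))
  else (if z < x then z.+1 else z.-1).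

Ltac crush := repeat (case: ifP => ?); lia.

Lemma Dn_refl a i : Dn a i i = 0.
Proof. by rewrite /Dn eqxx. Qed.
Lemma Dn_0 a i j : 2 <= a -> Dn a i j = 0 -> i = j.
Proof. rewrite /Dn; crush. Qed.
Lemma En_tri a x y z : 2 <= a -> En a y z -> Dn a x z <= (Dn a x y).+1.
Proof. rewrite /En /Dn => Ha /andP [Hyz H]. crush. Qed.
Lemma pw_ok1 a b x z : 2 <= a -> a <= b -> x < b -> z < b -> 0 < Dn a x z -> pw a x z < b.
Proof. move=> ? ? ? ?; rewrite /pw; repeat (case: ifP => ?); rewrite /En /Dn; crush. Qed.
Lemma pw_ok2 a b x z : 2 <= a -> a <= b -> x < b -> z < b -> 0 < Dn a x z -> En a (pw a x z) z.
Proof. move=> ? ? ? ?; rewrite /pw; repeat (case: ifP => ?); rewrite /En /Dn; crush. Qed.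
Lemma pw_ok3 a b x z : 2 <= a -> a <= b -> x < b -> z < b -> 0 < Dn a x z -> (Dn a x (pw a x z)).+1 = Dn a x z.
Proof. move=> ? ? ? ?; rewrite /pw; repeat (case: ifP => ?); rewrite /En /Dn; crush. Qed.
Lemma Dn_lt a b x y : 2 <= a -> a <= b -> x < b -> y < b -> Dn a x y < b.
Proof. rewrite /Dn => *. crush. Qed.
Lemma En_sym a : symmetric (En a).
Proof. move=> i j; rewrite /En; lia. Qed.
Lemma En_irr a : irreflexive (En a).
Proof. move=> i; rewrite /En; lia. Qed.

Lemma L1 a b y z : 2 <= a -> a <= b -> y < b -> z < b ->
  ~~ ((y < a-1) || (y == b-1)) -> ~~ ((z < a-1) || (z == b-1)) -> y != z ->
  Dn a y (b-1) != Dn a z (b-1).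
Proof. rewrite /Dn => *. apply/eqP. crush. Qed.
Lemma L2 a b x w : 2 <= a -> a <= b -> x < b -> w < a - 1 ->
  ~~ ((x < a-1) || (x == b-1)) -> Dn a x (b-1) != Dn a w (b-1).
Proof. rewrite /Dn => *. apply/eqP. crush. Qed.
Lemma L3 a b x : 2 <= a -> a <= b -> x < b ->
  ~~ ((x < a-1) || (x == b-1)) -> Dn a x 0 != Dn a (b-1) 0.
Proof. rewrite /Dn => *. apply/eqP. crush. Qed.
Lemma L4 a c1 c2 t : 3 <= a -> c1 < a - 1 -> c2 < a - 1 -> t != c1 -> t != c2 ->
  Dn a c1 t = Dn a c2 t.
Proof. rewrite /Dn => *. crush. Qed.
Lemma L5 a w : 3 <= a -> w < a - 1 -> w != 0 -> Dn a (a-1) w = Dn a 0 w.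
Proof. rewrite /Dn => *. crush. Qed.

Definition eG (a b : nat) : rel 'I_b := fun i j => En a i j.
Arguments eG : clear implicits.

Lemma distE a b : 2 <= a -> a <= b -> forall x y : 'I_b, dist (eG a b) x y = Dn a x y.
Proof.
move=> Ha Hab x; apply: (@dist_char _ _ (fun y : 'I_b => Dn a x y)).
- exact: Dn_refl.
- by move=> y /(Dn_0 Ha) H; apply: val_inj.
- by move=> y z; apply: En_tri.
- move=> z Hz.
  have Hp := pw_ok1 Ha Hab (ltn_ord x) (ltn_ord z) Hz.
  exists (Ordinal Hp); first exact: (pw_ok2 Ha Hab (ltn_ord x) (ltn_ord z) Hz).
  exact: (pw_ok3 Ha Hab (ltn_ord x) (ltn_ord z) Hz).
- by move=> y; rewrite card_ord; apply: Dn_lt.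
Qed.

Lemma connG a b : 2 <= a -> a <= b -> connected_graph (eG a b).
Proof.
move=> Ha Hab x y; apply: (@ball_connect _ _ x (Dn a x y)).
rewrite (@ball_char _ _ (fun y : 'I_b => Dn a x y)) ?inE //.
- exact: Dn_refl.
- by move=> z /(Dn_0 Ha) H; apply: val_inj.
- by move=> u z; apply: En_tri.
- move=> z Hz.
  have Hp := pw_ok1 Ha Hab (ltn_ord x) (ltn_ord z) Hz.
  exists (Ordinal Hp); first exact: (pw_ok2 Ha Hab (ltn_ord x) (ltn_ord z) Hz).
  exact: (pw_ok3 Ha Hab (ltn_ord x) (ltn_ord z) Hz).
Qed.

Lemma lower2 (b : nat) (e : rel 'I_b) (W : {set 'I_b}) : 2 <= b -> wtr_set e W -> 2 <= #|W|.
Proof.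
move=> Hb [Hres Hwt]; rewrite leqNgt; apply/negP => HW.
have H0 : 0 < b by lia.
have H1 : b - 1 < b by lia.
case: (set_0Vmem W) => [W0|[w Hw]].
  have Hne : Ordinal H0 != Ordinal H1 by apply/eqP => /(congr1 val) /=; lia.
  by case: (Hres _ _ Hne) => x; rewrite W0 inE.
have HD : W :\ w = set0.
  apply: cards0_eq; move: HW; rewrite (cardsD1 w) Hw; lia.
pose x := if w == Ordinal H0 then Ordinal H1 else Ordinal H0.
have Hxw : x != w.
  rewrite /x; case: ifP => [/eqP -> | /negbT]; last by rewrite eq_sym.
  by apply/eqP => /(congr1 val) /=; lia.
have HxW : x \notin W.
  apply/negP => Hx; have : x \in W :\ w by rewrite !inE Hx andbT.
  by rewrite HD inE.
by case: (Hwt _ _ Hw HxW) => w'; rewrite HD inE.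
Qed.

Theorem theorem13 (a b : nat) : 2 <= a -> a <= b ->
  exists e : rel 'I_b,
    simple_graph e /\ connected_graph e /\ wt_dim_eq e a.
Proof.
move=> Ha Hab; exists (eG a b); split; first by split; [exact: En_sym | exact: En_irr].
split; first exact: connG.
have Hl : b - 1 < b by lia.
pose L := Ordinal Hl.
pose S := [set i : 'I_b | i < a - 1].
have memS i : (i \in S) = (i < a - 1) by rewrite inE.
have cardS : #|S| = a - 1 by apply: card_lt; lia.
pose W := L |: S.
have memW i : (i \in W) = (i < a - 1) || (val i == b - 1).
  by rewrite !inE orbC.
have dE := distE Ha Hab.
split.
  exists W; split; last first.
    rewrite cardsU1 cardS memS /=; case: ltnP => H; lia.
  split.
    move=> y z Hyz.
    case Hy: (y \in W).
      exists y => //; rewrite !dE Dn_refl; apply/eqP => /esym /(Dn_0 Ha) H.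
      by move: Hyz; rewrite (val_inj H) eqxx.
    case Hz: (z \in W).
      exists z => //; rewrite !dE Dn_refl; apply/eqP => /(Dn_0 Ha) H.
      by move: Hyz; rewrite (val_inj H) eqxx.
    exists L; first by rewrite memW /= eqxx orbT.
    rewrite !dE /=; apply: L1 => //; [by rewrite -memW Hy | by rewrite -memW Hz].
  move=> w x Hw Hx; move: (Hx); rewrite memW => Hx'.
  move: (Hw); rewrite memW; case/orP => Hw'.
    exists L.
      rewrite !inE; apply/andP; split; last by rewrite eqxx.
      apply/eqP => /(congr1 val) /=; lia.
    rewrite !dE /=; exact: L2.
  have H0 : 0 < b by lia.
  exists (Ordinal H0).
    rewrite !inE /=; apply/andP; split.
      by apply/eqP => /(congr1 val) /=; move/eqP: Hw' => /=; lia.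
    by apply/orP; right; lia.
  rewrite !dE /=; move/eqP: Hw' => ->; exact: L3.
move=> W' HW'.
case: (ltnP a 3) => Ha3.
  have -> : a = 2 by lia.
  by apply: lower2 HW'; lia.
case: HW' => Hres Hwt.
have SsubW : S \subset W'.
  apply/subsetP => c Hc; rewrite memS in Hc; apply/negPn/negP => HcW.
  have [c' Hc'S Hcc'] : exists2 c' : 'I_b, c' < a-1 & c' != c.
    case: (eqVneq (nat_of_ord c) 0) => Hc0.
      have H1 : 1 < b by lia.
      exists (Ordinal H1) => /=; [lia | apply/eqP => /(congr1 val) /=; lia].
    have H0 : 0 < b by lia.
    exists (Ordinal H0) => /=; [lia | apply/eqP => /(congr1 val) /=; lia].
  case Hc'W: (c' \in W').
    case: (Hwt c' c Hc'W HcW) => w'; rewrite !inE => /andP [Hw'c' Hw'W].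
    have Hw'c : w' != c by apply: contraNneq HcW => <-.
    by rewrite !dE (@L4 a c c' w' Ha3 Hc Hc'S Hw'c Hw'c') eqxx.
  have Hcc2 : c != c' by rewrite eq_sym.
  case: (Hres c c' Hcc2) => x HxW.
  have Hxc : x != c by apply: contraNneq HcW => <-.
  have Hxc' : x != c' by apply: contraNneq (negbT Hc'W) => <-.
  by rewrite !dE (@L4 a c c' x Ha3 Hc Hc'S Hxc Hxc') eqxx.
have [u HuW HuS] : exists2 u, u \in W' & u \notin S.
  have Hh : a - 1 < b by lia.
  case HhW: (Ordinal Hh \in W').
    by exists (Ordinal Hh) => //; rewrite memS /= ltnn.
  have H0 : 0 < b by lia.
  have HoW : Ordinal H0 \in W' by apply: (subsetP SsubW); rewrite memS /=; lia.
  case: (Hwt _ _ HoW (negbT HhW)) => w'; rewrite !inE => /andP [Hw'o Hw'W] Hd.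
  exists w' => //; apply/negP; rewrite memS => Hw'S.
  by move: Hd; rewrite !dE /= (@L5 a w' Ha3 Hw'S Hw'o) eqxx.
have := subset_leq_card (_ : u |: S \subset W').
rewrite cardsU1 HuS cardS => H; apply: (leq_trans _ (H _)); first by lia.
by apply/subsetP => z; rewrite !inE; case/orP => [/eqP -> //|]; move=> Hz; apply: (subsetP SsubW); rewrite memS.
Qed.
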